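(* Let $\mu$ be a probability measure on $\mathrm{Homeo}_+(\mathbb{R})$ with finite or countable support. If $\phi_+\equiv 1$, then $\hat\phi_+\equiv 0$. Similarly, if $\phi_-\equiv1$, then $\hat\phi_-\equiv 0$.
   Context: Setup. Let $\mu$ be a probability measure on the group $\mathrm{Homeo}_+(\mathbb{R})$ of orientation-preserving homeomorphisms of $\mathbb{R}$, supported on a finite or countable set $\{f_1,f_2,\dots\}$ with $p_i=\mu(\{f_i\})>0$, $\sum_i p_i=1$. Let $g_1,g_2,\dots$ be i.i.d. random maps with law $\mu$, and set $F_0=\mathrm{id}$, $F_n=g_n\circ\cdots\circ g_1$ (forward dynamics). The inverse dynamics is the random dynamical system defined by $\hat\mu$, the image of $\mu$ under $f\mapsto f^{-1}$ (so $\hat\mu(\{f^{-1}\})=\mu(\{f\})$); its random compositions are $\hat F_n=\hat g_n\circ\cdots\circ\hat g_1$ with $\hat g_i$ i.i.d. of law $\hat\mu$. For $x\in\mathbb{R}$ let $\phi_\pm(x)=\mathbb{P}(\lim_n F_n(x)=\pm\infty)$ and $\hat\phi_\pm(x)=\mathbb{P}(\lim_n \hat F_n(x)=\pm\infty)$. *)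

(* Defs.v *)
From HB Require Import structures.
From mathcomp Require Import all_boot all_order all_algebra.
From mathcomp Require Import all_classical all_reals all_analysis.
Set Implicit Arguments. Unset Strict Implicit. Unset Printing Implicit Defensive.
Import Order.TTheory GRing.Theory Num.Theory.
Import numFieldNormedType.Exports.
Local Open Scope classical_set_scope.
Local Open Scope ring_scope.

Definition homeo_plus (R : realType) (f g : R -> R) : Prop :=
  continuous f /\ continuous g /\ cancel f g /\ cancel g f /\
  (forall x y : R, x < y -> f x < f y).

(* xi : nat -> T -> I is an i.i.d. sequence of random indices with law p:
   each level set is measurable and all finite-dimensional distributions
   of (xi 0, ..., xi (n-1)) are product measures. *)
Definition iid_indices (d : measure_display) (T : measurableType d)
  (R : realType) (P : probability T R) (I : Type)
  (p : I -> R) (xi : nat -> T -> I) : Prop :=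
  (forall n i, measurable (xi n @^-1` [set i])) /\
  (forall (n : nat) (a : nat -> I),
     P (\bigcap_(k in `I_n) (xi k @^-1` [set a k])) =
     ((\prod_(k < n) p (a k))%:E)).

(* Random composition h_{xi_{n-1}} o ... o h_{xi_0}, applied to x. *)
Fixpoint rcomp (T I : Type) (R : Type) (h : I -> R -> R) (xi : nat -> T -> I)
  (n : nat) (w : T) (x : R) : R :=
  match n with
  | 0 => x
  | n'.+1 => h (xi n' w) (rcomp h xi n' w x)
  end.

Definition phi_plus (d : measure_display) (T : measurableType d)
  (R : realType) (P : probability T R) (I : Type)
  (h : I -> R -> R) (xi : nat -> T -> I) (x : R) : \bar R :=
  P [set w | (fun n => rcomp h xi n w x) @ \oo --> +oo].

Definition phi_minus (d : measure_display) (T : measurableType d)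
  (R : realType) (P : probability T R) (I : Type)
  (h : I -> R -> R) (xi : nat -> T -> I) (x : R) : \bar R :=
  P [set w | (fun n => rcomp h xi n w x) @ \oo --> -oo].

(* Main.v *)
Require Import Defs.
From HB Require Import structures.
From mathcomp Require Import all_boot all_order all_algebra.
From mathcomp Require Import all_classical all_reals all_analysis.
From mathcomp Require Import lra.
Import Order.TTheory GRing.Theory Num.Theory.
Import numFieldNormedType.Exports.
Local Open Scope classical_set_scope.
Local Open Scope ring_scope.
Set Implicit Arguments. Unset Strict Implicit. Unset Printing Implicit Defensive.

Lemma measure_countable_bigcup (R : realType) d (T : measurableType d)
  (mu : {measure set T -> \bar R}) (J : countType) (D : J -> set T) :
  (forall j, measurable (D j)) -> (forall i j, i != j -> D i `&` D j = set0) ->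
  mu (\bigcup_j D j) = \esum_(j in [set: J]) mu (D j).
Proof.
move=> mD tD.
pose E k := if @pickle_inv J k is Some j then D j else set0.
have UE : \bigcup_j D j = \bigcup_k E k.
  apply/seteqP; split => w [j _ Dw].
    by exists (pickle j) => //; rewrite /E pickleK_inv.
  by move: Dw; rewrite /E; case: pickle_inv => // i Dw; exists i.
have mE k : measurable (E k) by rewrite /E; case: pickle_inv.
have tE : trivIset setT E.
  move=> k k' _ _; rewrite /E.
  have Hk := @pickle_invK J k; have Hk' := @pickle_invK J k'.
  case: (pickle_inv k) Hk => [j|] Hk; last by case => w [].
  case: (pickle_inv k') Hk' => [j'|] Hk'; last by case => w [].
  case=> w [Dj Dj']; have [ejj|neq] := eqVneq j j'.
    by rewrite -Hk -Hk' /= ejj.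
  by have := tD _ _ neq; rewrite -subset0 => /(_ w (conj Dj Dj')).
rewrite UE measure_bigcup //.
rewrite nneseries_esum //.
rewrite (_ : [set x | x \in [set: nat]] = [set: nat]); last by apply/seteqP; split => x //= _; rewrite in_setT.
transitivity (\esum_(k in [set: nat] `&` range (@pickle J)) mu (E k)).
  rewrite esum_mkcondr; apply: eq_esum => k _; case: ifPn => // Hk.
  rewrite /E; case Hp: pickle_inv => [j|]; last exact: measure0.
  exfalso; move/negP: Hk; apply; rewrite inE; exists j => //.
  by have := @pickle_invK J k; rewrite Hp.
rewrite setTI esum_image; last by move=> x y _ _; exact: (pcan_inj (@pickleK_inv J)).
by apply: eq_esum => j _; rewrite /E pickleK_inv.
Qed.

Section Seqs.
Variables (R : realType) (I : countType) (d : measure_display) (T : measurableType d)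
  (P : probability T R) (p : I -> R) (xi : nat -> T -> I).
Hypothesis hiid : iid_indices P p xi.

Definition X n w : seq I := [seq xi k w | k <- iota 0 n].

Lemma XS n w : X n.+1 w = rcons (X n w) (xi n w).
Proof. by rewrite /X -addn1 iotaD map_cat cats1. Qed.

Lemma size_X n w : size (X n w) = n.
Proof. by rewrite /X size_map size_iota. Qed.

Lemma mX1 n s : measurable (X n @^-1` [set s]).
Proof.
elim: n s => [|n IH] s.
  case: s => [|i s].
    by rewrite (_ : _ @^-1` _ = setT) //; apply/seteqP; split => w //.
  by rewrite (_ : _ @^-1` _ = set0) //; apply/seteqP; split => w //.
case/lastP: s => [|s i].
  rewrite (_ : _ @^-1` _ = set0) //; apply/seteqP; split => w //.
rewrite (_ : _ @^-1` _ = X n @^-1` [set s] `&` xi n @^-1` [set i]).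
  by apply: measurableI => //; exact: hiid.1.
  apply/seteqP; split => w; rewrite /preimage /= XS.
  by move/rcons_inj => [-> ->].
by case=> -> ->.
Qed.

Lemma mX n S : measurable (X n @^-1` S).
Proof.
rewrite (_ : _ @^-1` _ = \bigcup_(s : seq I) (X n @^-1` ([set s] `&` S))).
  apply: countable_bigcupT_measurable; first exact: countableP.
  move=> s; case: (pselect (S s)) => Ss.
    rewrite (_ : [set s] `&` S = [set s]); first exact: mX1.
    by apply/seteqP; split => t /=; [case|move=> ->].
  rewrite (_ : [set s] `&` S = set0); first by rewrite preimage_set0.
  by apply/seteqP; split => t //= [-> ].
apply/seteqP; split => w /=.
  by move=> Sw; exists (X n w).
by case=> s _ [-> ].
Qed.

Lemma nth_X n w k i0 : (k < n)%N -> nth i0 (X n w) k = xi k w.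
Proof.
by move=> kn; rewrite /X (nth_map 0%N) ?size_iota // nth_iota.
Qed.

Lemma PX1 n s : size s = n -> P (X n @^-1` [set s]) = (\prod_(x <- s) p x)%:E.
Proof.
case: s => [|i0 s'] sn.
  rewrite -sn big_nil.
  rewrite (_ : _ @^-1` _ = setT); first exact: probability_setT.
  apply/seteqP; split => w // _; rewrite /X -sn //.
set s := i0 :: s' in sn *.
have -> : X n @^-1` [set s] = \bigcap_(k in `I_n) (xi k @^-1` [set nth i0 s k]).
  apply/seteqP; split => w H.
    move=> k kn; rewrite /preimage /= -H nth_X //.
  apply: (@eq_from_nth _ i0); first by rewrite size_X sn.
  move=> k; rewrite size_X => kn; rewrite nth_X //; exact: (H k kn).
rewrite hiid.2; congr (_%:E).
by rewrite (big_nth i0) sn big_mkord.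
Qed.

Lemma PXrev n s : P (X n @^-1` [set rev s]) = P (X n @^-1` [set s]).
Proof.
have [sn|sn] := eqVneq (size s) n.
  by rewrite !PX1 ?size_rev ?(eqP sn) // big_rev.
have E1 : X n @^-1` [set s] = set0.
  apply/seteqP; split => w // Hw.
  by move: sn; rewrite -[s]Hw size_X eqxx.
have E2 : X n @^-1` [set rev s] = set0.
  apply/seteqP; split => w // Hw.
  by move: sn; rewrite -(size_rev s) -[rev s]Hw size_X eqxx.
by rewrite E1 E2.
Qed.

Lemma PX_esum n S : P (X n @^-1` S) = \esum_(s in [set: seq I]) P (X n @^-1` ([set s] `&` S)).
Proof.
rewrite -measure_countable_bigcup.
- congr (P _); apply/seteqP; split => w.
    by move=> Sw; exists (X n w).
  by case=> s _ [].
- by move=> s; exact: mX.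
- move=> i j ij; apply/seteqP; split => w //; case=> -[Hi _] [Hj _].
  by move: ij; rewrite -Hi -Hj eqxx.
Qed.

Lemma PXrevS n S : P (X n @^-1` (rev @^-1` S)) = P (X n @^-1` S).
Proof.
rewrite !PX_esum (reindex_esum [set: seq I] [set: seq I] (@rev I)); last first.
  split.
  - by move=> x.
  - by move=> x y _ _; exact: (can_inj (@revK I)).
  - by move=> y _; exists (rev y) => //; rewrite revK.
apply: eq_esum => t _.
case: (pselect (S t)) => St.
  rewrite (_ : [set rev t] `&` _ = [set rev t]); last first.
    by apply/seteqP; split => u /=; [case|move=> ->; split => //; rewrite revK].
  rewrite (_ : [set t] `&` S = [set t]); last first.
    by apply/seteqP; split => u /=; [case|move=> ->].
  exact: PXrev.
rewrite (_ : [set rev t] `&` _ = set0); last first.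
  by apply/seteqP; split => u //= [->]; rewrite revK.
rewrite (_ : [set t] `&` S = set0) //.
by apply/seteqP; split => u //= [->].
Qed.

Lemma mcvgy (g : nat -> seq I -> R) :
  measurable [set w | (fun n => g n (X n w)) @ \oo --> +oo].
Proof.
rewrite (_ : [set w | _] = \bigcap_(M in [set: nat]) \bigcup_(N in [set: nat])
   \bigcap_(m in [set m | (N <= m)%N]) X m @^-1` [set s | M%:R < g m s]).
  apply: bigcapT_measurable => M; apply: bigcup_measurable => N _.
  apply: bigcap_measurable; first by exists N => /=.
  by move=> m _; exact: mX.
apply/seteqP; split => w /=.
  move=> H M _; have := (cvgryPgt _).1 H M%:R.
  case=> N _ HN; exists N => // m Nm; exact: HN.
move=> H; apply/cvgryPgt => A.
have [N _ HN] := H (Num.bound `|A|) Logic.I.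
exists N => // m Nm /=; apply: lt_trans (HN m Nm).
exact: le_lt_trans (ler_norm A) (archi_boundP (normr_ge0 A)).
Qed.

Lemma core (S1 S2 : nat -> set (seq I)) :
  (forall m s, S1 m s <-> S2 m (rev s)) ->
  P (\bigcup_N \bigcap_(m in [set m | (N <= m)%N]) X m @^-1` (~` S2 m)) = 1%E ->
  P (\bigcup_N \bigcap_(m in [set m | (N <= m)%N]) X m @^-1` (S1 m)) = 0%E.
Proof.
move=> HS HK.
set E := fun N => \bigcap_(m in [set m | (N <= m)%N]) X m @^-1` (S1 m).
set K := fun N => \bigcap_(m in [set m | (N <= m)%N]) X m @^-1` (~` S2 m).
have mE N : measurable (E N).
  by apply: bigcap_measurable; [exists N => /= | move=> m _; exact: mX].
have mK N : measurable (K N).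
  by apply: bigcap_measurable; [exists N => /= | move=> m _; exact: mX].
have ndE : nondecreasing_seq E.
  move=> a b ab; apply/subsetPset => w Hw m bm; apply: Hw; exact: leq_trans ab bm.
have ndK : nondecreasing_seq K.
  move=> a b ab; apply/subsetPset => w Hw m bm; apply: Hw; exact: leq_trans ab bm.
have bnd N : (P (E N) <= 1 - P (K N))%E.
  set A := X N @^-1` S2 N.
  have mA : measurable A by exact: mX.
  have h1 : (P (E N) <= P A)%E.
    rewrite -PXrevS.
    have -> : X N @^-1` (rev @^-1` S2 N) = X N @^-1` S1 N.
      by apply/seteqP; split => w /=; move/HS.
    apply: le_measure; rewrite ?inE //; first exact: mX.
    by move=> w Hw; apply: Hw => /=.
  have h2 : (P (K N) <= 1 - P A)%E.
    rewrite -probability_setC //; apply: le_measure; rewrite ?inE //.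
      exact: measurableC.
    by move=> w Hw; apply: Hw => /=.
  move: h1 h2.
  rewrite -(fineK (fin_num_measure P _ (mE N))) -(fineK (fin_num_measure P _ (mK N))).
  rewrite -(fineK (fin_num_measure P _ mA)).
  rewrite -!EFinB !lee_fin; lra.
have mUE : measurable (\bigcup_n E n) by apply: bigcup_measurable.
have mUK : measurable (\bigcup_n K n) by apply: bigcup_measurable.
have cE := @nondecreasing_cvg_mu _ _ _ P _ mE mUE ndE.
have cK := @nondecreasing_cvg_mu _ _ _ P _ mK mUK ndK.
have eK : P (\bigcup_n K n) = 1%E by exact: HK.
have cK1 : (P \o K) @ \oo --> 1%E by rewrite -eK; exact: cK.
have cB : (fun N => 1 - P (K N))%E @ \oo --> 0%E.
  rewrite (_ : 0%E = 1 - 1)%E; last by rewrite subee.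
  by apply: cvgeB => //; exact: cvg_cst.
apply/eqP; rewrite eq_le measure_ge0 andbT.
rewrite -(cvg_lim _ cE) // -(cvg_lim _ cB) //.
apply: lee_lim; [exact: cvgP cE | exact: cvgP cB | exact: nearW bnd].
Qed.

Lemma mcvgNy (g : nat -> seq I -> R) :
  measurable [set w | (fun n => g n (X n w)) @ \oo --> -oo].
Proof.
rewrite (_ : [set w | _] = [set w | (fun n => - g n (X n w)) @ \oo --> +oo]).
  exact: (mcvgy (fun n s => - g n s)).
apply/seteqP; split => w /=.
  by move=> H; apply/cvgNry.
by move/cvgNry.
Qed.

Variables (f finv : I -> R -> R).
Hypothesis hf : forall i, homeo_plus (f i) (finv i).

Definition G (h : I -> R -> R) (s : seq I) (x : R) := foldl (fun acc i => h i acc) x s.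

Lemma rcompE h n w x : rcomp h xi n w x = G h (X n w) x.
Proof.
elim: n => [|n IH] //.
rewrite [LHS]/= IH XS /G foldl_rcons //.
Qed.

Lemma rcompE_fun h w x : (fun n => rcomp h xi n w x) = (fun n => G h (X n w) x).
Proof. by apply/funext => n; exact: rcompE. Qed.

Lemma f_mono i : {mono f i : a b / a < b}.
Proof.
move=> a b; apply/idP/idP; last exact: (hf i).2.2.2.2.
case: (ltgtP a b) => // [ba|<-]; last by rewrite ltxx.
by move=> H; have := (hf i).2.2.2.2 _ _ ba; rewrite ltNge (ltW H).
Qed.

Lemma Gf_mono s : {mono G f s : a b / a < b}.
Proof.
elim: s => [|i s IH] a b //.
by rewrite -(f_mono i a b); exact: IH.
Qed.

Lemma Gfinv_cons i s z : G finv (rev (i :: s)) z = finv i (G finv (rev s) z).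
Proof. by rewrite rev_cons /G foldl_rcons. Qed.

Lemma GKi s x : G f s (G finv (rev s) x) = x.
Proof.
elim: s x => [|i s IH] x //.
rewrite Gfinv_cons (_ : G f (i :: s) _ = G f s (f i (finv i (G finv (rev s) x)))) //.
by rewrite (hf i).2.2.2.1 IH.
Qed.

Lemma key_gt s x y : (y < G finv s x) = (G f (rev s) y < x).
Proof. by rewrite -{1}(revK s) -(Gf_mono (rev s)) GKi. Qed.

Lemma key_lt s x y : (G finv s x < y) = (x < G f (rev s) y).
Proof. by rewrite -{1}(revK s) -(Gf_mono (rev s)) GKi. Qed.

Lemma plus_case : (forall x, phi_plus P f xi x = 1%E) -> forall x, phi_plus P finv xi x = 0%E.
Proof.
move=> Hf x; set y := x.
have := @core (fun m => [set s | y < G finv s x]) (fun m => [set t | G f t y < x]).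
move=> /(_ _ _) H.
have HS : forall (m : nat) (s : seq I), (y < G finv s x) <-> (G f (rev s) y < x).
  by move=> m s; rewrite key_gt.
have {H} H := H HS.
have mUf : measurable [set w | (fun n => rcomp f xi n w y) @ \oo --> +oo].
  rewrite (_ : [set w | _] = [set w | (fun n => G f (X n w) y) @ \oo --> +oo]).
    exact: (mcvgy (fun n s => G f s y)).
  by apply/seteqP; split => w /=; rewrite rcompE_fun.
have mUi : measurable [set w | (fun n => rcomp finv xi n w x) @ \oo --> +oo].
  rewrite (_ : [set w | _] = [set w | (fun n => G finv (X n w) x) @ \oo --> +oo]).
    exact: (mcvgy (fun n s => G finv s x)).
  by apply/seteqP; split => w /=; rewrite rcompE_fun.
set UK := \bigcup_N _ in H.
set UE := \bigcup_N _ in H.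
have mUK : measurable UK.
  apply: bigcup_measurable => N _; apply: bigcap_measurable; first by exists N => /=.
  by move=> m _; exact: mX.
have mUE : measurable UE.
  apply: bigcup_measurable => N _; apply: bigcap_measurable; first by exists N => /=.
  by move=> m _; exact: mX.
have hK : P UK = 1%E.
  apply/eqP; rewrite eq_le probability_le1 //=.
  rewrite -(Hf y) /phi_plus le_measure ?inE //.
  move=> w Hw; have [N _ HN] := (cvgryPgt _).1 Hw x.
  exists N => // m Nm /=; have := HN m Nm; rewrite /= rcompE => Hm Hm'.
  by have := lt_trans Hm Hm'; rewrite ltxx.
have hE := H hK.
rewrite /phi_plus; apply/eqP; rewrite eq_le measure_ge0 andbT -hE le_measure ?inE //.
move=> w Hw; have [N _ HN] := (cvgryPgt _).1 Hw y.
by exists N => // m Nm /=; have := HN m Nm; rewrite /= rcompE.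
Qed.

Lemma minus_case : (forall x, phi_minus P f xi x = 1%E) -> forall x, phi_minus P finv xi x = 0%E.
Proof.
move=> Hf x; set y := x.
have := @core (fun m => [set s | G finv s x < y]) (fun m => [set t | x < G f t y]).
move=> /(_ _ _) H.
have HS : forall (m : nat) (s : seq I), (G finv s x < y) <-> (x < G f (rev s) y).
  by move=> m s; rewrite key_lt.
have {H} H := H HS.
have mUf : measurable [set w | (fun n => rcomp f xi n w y) @ \oo --> -oo].
  rewrite (_ : [set w | _] = [set w | (fun n => G f (X n w) y) @ \oo --> -oo]).
    exact: (mcvgNy (fun n s => G f s y)).
  by apply/seteqP; split => w /=; rewrite rcompE_fun.
have mUi : measurable [set w | (fun n => rcomp finv xi n w x) @ \oo --> -oo].
  rewrite (_ : [set w | _] = [set w | (fun n => G finv (X n w) x) @ \oo --> -oo]).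
    exact: (mcvgNy (fun n s => G finv s x)).
  by apply/seteqP; split => w /=; rewrite rcompE_fun.
set UK := \bigcup_N _ in H.
set UE := \bigcup_N _ in H.
have mUK : measurable UK.
  apply: bigcup_measurable => N _; apply: bigcap_measurable; first by exists N => /=.
  by move=> m _; exact: mX.
have mUE : measurable UE.
  apply: bigcup_measurable => N _; apply: bigcap_measurable; first by exists N => /=.
  by move=> m _; exact: mX.
have hK : P UK = 1%E.
  apply/eqP; rewrite eq_le probability_le1 //=.
  rewrite -(Hf y) /phi_minus le_measure ?inE //.
  move=> w Hw; have [N _ HN] := (cvgrNyPlt _).1 Hw x.
  exists N => // m Nm /=; have := HN m Nm; rewrite /= rcompE => Hm Hm'.
  by have := lt_trans Hm' Hm; rewrite ltxx.
have hE := H hK.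
rewrite /phi_minus; apply/eqP; rewrite eq_le measure_ge0 andbT -hE le_measure ?inE //.
move=> w Hw; have [N _ HN] := (cvgrNyPlt _).1 Hw y.
by exists N => // m Nm /=; have := HN m Nm; rewrite /= rcompE.
Qed.

End Seqs.

Unset Implicit Arguments.
Set Strict Implicit.

Theorem mainTheorem9 (R : realType) (I : countType)
  (f finv : I -> R -> R) (p : I -> R)
  (d : measure_display) (T : measurableType d) (P : probability T R)
  (xi : nat -> T -> I) :
  (forall i, homeo_plus (f i) (finv i)) ->
  (forall i, 0 < p i) ->
  (\esum_(i in [set: I]) (p i)%:E = 1)%E ->
  iid_indices P p xi ->
  ((forall x, phi_plus P f xi x = 1%E) -> forall x, phi_plus P finv xi x = 0%E) /\
  ((forall x, phi_minus P f xi x = 1%E) -> forall x, phi_minus P finv xi x = 0%E).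
Proof.
move=> hf _ _ hiid; split.
- exact: (plus_case hiid hf).
- exact: (minus_case hiid hf).
Qed.
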